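(* Assume $\mathcal{T}$ is a tree. There is a constant $m_1$ such that for all measurable locally bounded functions $w_i,x_i,y_i$ ($i\in\mathcal{I}$), $z_j$ ($j\in\mathcal{J}$), $\psi_{ij}$ (with $\psi_{ij}=0$ for $i\not\sim j$) on $[0,\infty)$ satisfying $$x_i(t)=w_i(t)-\sum_{j\in\mathcal{J}}\mu_{ij}\int_0^t\psi_{ij}(s)ds-\theta_i\int_0^ty_i(s)ds,\quad \sum_{j\in\mathcal{J}}\psi_{ij}=x_i-y_i\ \ (i\in\mathcal{I}),\quad \sum_{i\in\mathcal{I}}\psi_{ij}=-z_j\ \ (j\in\mathcal{J}),$$ we have $$\|\mathfrak{J}\psi(t)\|+\|x(t)\|\le m_1\big(\|w\|_t^*+\|\mathfrak{J}y\|_t^*+\|\mathfrak{J}z\|_t^*\big),\qquad t\ge0;$$ $m_1$ does not depend on $\psi,w,x,y,z$ or $t$.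
   Context: $\mathcal{I}=\{1,\dots,I\}$, $\mathcal{J}=\{I+1,\dots,I+J\}$, $\mathcal{E}\subset\mathcal{I}\times\mathcal{J}$, $i\sim j$ iff $(i,j)\in\mathcal{E}$; $\mathcal{T}$ is the bipartite graph with vertices $\mathcal{I}\cup\mathcal{J}$ and edges $\mathcal{E}$. Constants $\mu_{ij}>0$ for $(i,j)\in\mathcal{E}$, $\mu_{ij}=0$ otherwise, $\theta_i\ge0$. $\mathfrak{J}f(t)=\int_0^tf(s)ds$ (applied componentwise to vector/array-valued functions). $\|a\|$ denotes the sum of absolute values of the entries of a vector or array, and $\|f\|_t^*=\sup_{0\le s\le t}\|f(s)\|$. *)

(* Defs.v *)
From HB Require Import structures.
From mathcomp Require Import all_boot all_order all_algebra.
From mathcomp Require Import all_classical all_reals all_analysis.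
Set Implicit Arguments. Unset Strict Implicit. Unset Printing Implicit Defensive.
Import Order.TTheory GRing.Theory Num.Theory.
Local Open Scope classical_set_scope.
Local Open Scope ring_scope.

Definition vert (nI nJ : nat) : finType := ('I_nI + 'I_nJ)%type.

Definition badj (nI nJ : nat) (E : 'I_nI -> 'I_nJ -> bool) : rel (vert nI nJ) :=
  fun u v => match u, v with
             | inl i, inr j => E i j
             | inr j, inl i => E i j
             | _, _ => false
             end.

Definition connectedG (nI nJ : nat) (E : 'I_nI -> 'I_nJ -> bool) : Prop :=
  forall u v : vert nI nJ, connect (badj E) u v.

Definition acyclicG (nI nJ : nat) (E : 'I_nI -> 'I_nJ -> bool) : Prop :=
  forall p : seq (vert nI nJ), uniq p -> (3 <= size p)%N -> ~~ cycle (badj E) p.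

Definition is_tree (nI nJ : nat) (E : 'I_nI -> 'I_nJ -> bool) : Prop :=
  (0 < nI + nJ)%N /\ connectedG E /\ acyclicG E.

Definition integ0 {R : realType} (f : R -> R) (t : R) : R :=
  Rintegral (@lebesgue_measure R) `[0, t] f.

Definition meas_locbdd {R : realType} (f : R -> R) : Prop :=
  measurable_fun (`[0%R, +oo[%classic : set R) f /\
  forall t, 0 <= t -> exists M : R, forall s, 0 <= s <= t -> `|f s| <= M.

Definition supnorm {R : realType} (nf : R -> R) (t : R) : R :=
  sup [set nf s | s in `[0, t]].

(* Main.v *)
Require Import Defs.
From HB Require Import structures.
From mathcomp Require Import all_boot all_order all_algebra.
From mathcomp Require Import all_classical all_reals all_analysis.
Import Order.TTheory GRing.Theory Num.Theory.
Local Open Scope classical_set_scope.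
Local Open Scope ring_scope.
From mathcomp Require Import ring lra.

Section Comb.
Context (nI nJ : nat) (E g : 'I_nI -> 'I_nJ -> bool).

Definition bB : rel (vert nI nJ) := fun u v =>
  match u, v with
  | inl i, inr j => E i j && ~~ g i j
  | inr j, inl i => E i j && ~~ g i j
  | _, _ => false
  end.

Lemma bB_sym u v : bB u v = bB v u.
Proof. by case: u => [i|j]; case: v => [i'|j']. Qed.

Lemma bB_irr u : bB u u = false.
Proof. by case: u. Qed.

Lemma bB_sub : subrel bB (badj E).
Proof. by case=> [i|j] [i'|j'] //= /andP[]. Qed.

Lemma tree_closure : acyclicG E ->
  (forall i j, ~~ E i j -> g i j) ->
  (forall i j, E i j -> (forall j', j' != j -> g i j') -> g i j) ->
  (forall i j, E i j -> (forall i', i' != i -> g i' j) -> g i j) ->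
  forall i j, g i j.
Proof.
move=> acy gnE gI gJ.
have ext : forall u v, bB u v -> exists2 w, w != v & bB u w.
  case=> [i|j] [i'|j'] //= /andP[Eij ngij].
  - have : ~ (forall j'', j'' != j' -> g i j'') by move=> /(gI _ _ Eij); apply/negP.
    move=> /existsNP [j'' /not_implyP [nj ng]].
    exists (inr j'') => //; rewrite /= ?(inj_eq (@inr_inj _ _)) //.
    have ng' := introN idP ng.
    rewrite ng' andbT.
    by apply: contraT => /gnE; move/negP: ng'.
  - have : ~ (forall i'', i'' != i' -> g i'' j) by move=> /(gJ _ _ Eij); apply/negP.
    move=> /existsNP [i'' /not_implyP [ni ng]].
    exists (inl i'') => //; rewrite /= ?(inj_eq (@inl_inj _ _)) //.
    have ng' := introN idP ng.
    rewrite ng' andbT.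
    by apply: contraT => /gnE; move/negP: ng'.
apply: contrapT => /existsNP [i0 /existsNP [j0 ng0]].
have E0 : E i0 j0 by apply: contraT => /gnE; move/negP: ng0 => /negP.
have grow : forall n, exists v u rest, [/\ uniq (v :: u :: rest),
    path bB v (u :: rest) & size rest = n].
  elim=> [|n [v [u [rest [un pa sz]]]]].
    exists (inl i0), (inr j0), [::]; split => //=.
    by rewrite E0 andbT; apply/negP.
  have bvu : bB v u by move: pa => /= /andP[].
  have [w wu bvw] := ext _ _ bvu.
  case: (boolP (w \in v :: u :: rest)) => win.
  - exfalso.
    have wv : w != v by apply: contraTneq bvw => ->; rewrite bB_irr.
    have wrest : w \in rest.
      by move: win; rewrite !inE (negbTE wv) (negbTE wu).
    case/splitPr: wrest un pa sz => r1 r2 un pa _.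
    have := acy (v :: rcons (u :: r1) w).
    have -> : uniq (v :: rcons (u :: r1) w).
      apply: subseq_uniq un.
      have -> : v :: u :: r1 ++ w :: r2 = (v :: rcons (u :: r1) w) ++ r2.
        by rewrite /= -cats1 -catA.
      exact: prefix_subseq.
    move=> /(_ isT); rewrite /= size_rcons => /(_ isT) /negP; apply.
    have : path bB v (rcons (rcons (u :: r1) w) v).
      rewrite rcons_path last_rcons bB_sym bvw andbT.
      move: pa; rewrite -cat_cons cat_path => /andP[p1 p2].
      rewrite rcons_path p1 /=.
      by move: p2 => /= /andP[].
    by move/(sub_path bB_sub).
  - exists w, v, (u :: rest); split => //=.
    + by rewrite win.
    + by rewrite bB_sym bvw.
    + by rewrite sz.
have [v [u [rest [un _ sz]]]] := grow #|vert nI nJ|.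
move: (max_card (mem (v :: u :: rest))).
by rewrite (card_uniqP un) /= sz; rewrite ltnNge leqnSn.
Qed.
End Comb.

Section Ana.
Context {R : realType}.
Notation mu := (@lebesgue_measure R).

Lemma mlb_int (f : R -> R) T (D : set R) : meas_locbdd f -> 0 <= T ->
  @measurable _ (measurableTypeR R) D -> D `<=` `[0, T] -> mu.-integrable D (EFin \o f).
Proof.
case=> mf bd T0 mD DT; have [M hM] := bd T T0.
apply: measurable_bounded_integrable => //.
- apply: (le_lt_trans (le_measure mu _ _ DT)); rewrite ?inE//.
  have hT : (@lebesgue_measure R `[0%R, T] < +oo)%E.
    by rewrite lebesgue_measure_itv; case: ifP => _ //; exact: ltry.
  exact: hT.
- apply: measurable_funS mf => // x /DT; rewrite /= !in_itv /= andbT => /andP[].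
  done.
- exists M; split; first exact: num_real.
  move=> M' MM' x /DT; rewrite /= in_itv /= => hx.
  exact: (le_trans (hM x hx) (ltW MM')).
Qed.

Lemma Rint_le_cst (D : set R) (f : R -> R) (L c : R) : @measurable _ (measurableTypeR R) D ->
  mu.-integrable D (EFin \o f) -> mu D = c%:E ->
  (forall x, D x -> f x <= L) -> \int[mu]_(x in D) f x <= L * c.
Proof.
move=> mD intf muD fL.
have intc : mu.-integrable D (EFin \o (fun _ : R => L)).
  apply: measurable_bounded_integrable => //.
  - by apply: (@le_lt_trans _ _ c%:E); [rewrite -muD; exact: lexx | exact: ltry].
  - exists `|L|; split; first exact: num_real.
    by move=> M LM x _ /=; exact: ltW.
apply: (le_trans (le_Rintegral mD intf intc fL)).
rewrite Rintegral_cst //; have -> : fine (lebesgue_measure D) = c by rewrite muD.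
by [].
Qed.

Lemma integ0_0 (f : R -> R) : integ0 f 0 = 0.
Proof. by rewrite /integ0 set_itv1 Rintegral_set1. Qed.

Lemma mu_itv_cc (a b : R) : a <= b -> mu `[a, b] = (b - a)%:E.
Proof.
move=> ab; rewrite lebesgue_measure_itv /= lte_fin.
case: ltP => [//|ba].
have -> : b = a by apply/le_anti; rewrite ab ba.
by rewrite subrr.
Qed.

Lemma mu_itv_oc (a b : R) : a <= b -> mu `]a, b] = (b - a)%:E.
Proof.
move=> ab; rewrite lebesgue_measure_itv /= lte_fin.
case: ltP => [//|ba].
have -> : b = a by apply/le_anti; rewrite ab ba.
by rewrite subrr.
Qed.


Lemma integ0_sub (f : R -> R) u c : meas_locbdd f -> 0 <= u -> u <= c ->
  integ0 f c - integ0 f u = \int[mu]_(x in `]u, c]) f x.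
Proof.
move=> mf u0 uc; rewrite /integ0.
have c0 : 0 <= c by exact: le_trans uc.
rewrite Rintegral_itvB //.
have := @mlb_int f c `[0, c] mf c0; apply => //.
Qed.

Lemma integ0_sub_le (f : R -> R) u c L : meas_locbdd f -> 0 <= u -> u <= c ->
  (forall s, u < s <= c -> f s <= L) -> integ0 f c - integ0 f u <= L * (c - u).
Proof.
move=> mf u0 uc fL; rewrite integ0_sub //.
have c0 : 0 <= c by exact: le_trans uc.
apply: Rint_le_cst => //; last exact: mu_itv_oc.
have := @mlb_int f c `]u, c] mf c0; apply => // x; rewrite /= !in_itv /= => /andP[ux ->].
by rewrite andbT (le_trans u0 (ltW ux)).
Qed.


Lemma ode1 (f : R -> R) (m G T : R) : 0 < m -> 0 <= G -> meas_locbdd f -> 0 <= T ->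
  (forall s, 0 <= s <= T -> f s + m * integ0 f s <= G) ->
  forall s, 0 <= s <= T -> integ0 f s <= G / m.
Proof.
move=> m0 G0 mf T0 hfG.
have iT : mu.-integrable `[0, T] (EFin \o f).
  by have := @mlb_int f T `[0, T] mf T0; apply.
have [c cT cmax] := EVT_max T0 (parameterized_integral_continuous T0 iT).
rewrite /parameterized_integral /= in cmax.
suff hc : integ0 f c <= G / m.
  by move=> s hs; apply: le_trans (cmax s _) hc; rewrite in_itv.
move: cT; rewrite in_itv /= => /andP[c0 cT].
rewrite leNgt; apply/negP => hc.
have [L hL] := mf.2 T T0.
have L0 : 0 <= L by apply: le_trans (hL 0 _); rewrite ?lexx.
set X := integ0 f in hc *.
have {}cmax : forall t, t \in `[0, T] -> X t <= X c by [].
set d := X c - G / m.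
have d0 : 0 < d by rewrite subr_gt0.
have Gm0 : 0 <= G / m by rewrite divr_ge0 // ltW.
have cpos : 0 < c.
  rewrite lt_def c0 andbT; apply/negP => /eqP c0'.
  by move: hc; rewrite c0' /X integ0_0 ltNge Gm0.
set K := G / m in d d0 Gm0 hc.
have mK : m * K = G by rewrite /K mulrC divfK // gt_eqF.
set h := Num.min c (d / (2 * (L + 1))).
have h0 : 0 < h by rewrite lt_min cpos divr_gt0 // mulr_gt0 // ltr_wpDl.
have hc' : h <= c by rewrite ge_min lexx.
have dE : d = X c - K by [].
have hd : h * (2 * (L + 1)) <= d.
  by rewrite -ler_pdivlMr ?mulr_gt0 ?ltr_wpDl // ge_min lexx orbT.
have Xu : forall u, c - h < u <= c -> K + d / 2 <= X u.
  move=> u /andP[hu uc].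
  have u0 : 0 <= u by apply: le_trans (ltW hu); rewrite subr_ge0.
  have := @integ0_sub_le f u c L mf u0 uc.
  move=> H.
  have {H} H : X c - X u <= L * (c - u).
    apply: H => s /andP[us sc]; apply: le_trans (ler_norm _) (hL s _).
    by rewrite (le_trans u0 (ltW us)) (le_trans sc cT).
  have : L * (c - u) <= L * h by rewrite ler_wpM2l // lerBlDr -lerBlDl ltW.
  nra.
have fneg : forall u, c - h < u <= c -> f u <= - (m * d / 2).
  move=> u hu; have := Xu u hu.
  have u0 : 0 <= u by apply: le_trans (ltW (andP hu).1); rewrite subr_ge0.
  have := hfG u; rewrite u0 (le_trans (andP hu).2 cT) => /(_ isT) hf.
  rewrite -/X in hf; nra.
have ch0 : 0 <= c - h by rewrite subr_ge0.
have chc : c - h <= c by rewrite gerBl ltW.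
have H2 := @integ0_sub_le f (c - h) c (- (m * d / 2)) mf ch0 chc fneg.
rewrite -/X in H2.
have H3 : X (c - h) <= X c by apply: cmax; rewrite in_itv /= ch0 (le_trans chc cT).
have H4 : 0 < m * d * h by rewrite !mulr_gt0.
nra.
Qed.

Lemma mlb_cst (k : R) : meas_locbdd (fun _ : R => k).
Proof. split; first exact: measurable_cst. by move=> t _; exists `|k|. Qed.

Lemma mlb_add (f g : R -> R) : meas_locbdd f -> meas_locbdd g ->
  meas_locbdd (fun s => f s + g s).
Proof.
move=> [mf bf] [mg bg]; split; first exact: measurable_realfun.measurable_funD.
move=> t t0; have [M1 h1] := bf t t0; have [M2 h2] := bg t t0.
exists (M1 + M2) => s hs; apply: le_trans (ler_normD _ _) _.
by apply: lerD; [exact: h1 | exact: h2].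
Qed.

Lemma mlb_scale (k : R) (f : R -> R) : meas_locbdd f ->
  meas_locbdd (fun s => k * f s).
Proof.
move=> [mf bf]; split; first exact: measurable_realfun.measurable_funM (measurable_cst _) mf.
move=> t t0; have [M1 h1] := bf t t0.
exists (`|k| * M1) => s hs; rewrite normrM ler_wpM2l //; exact: h1.
Qed.

Lemma mlb_opp (f : R -> R) : meas_locbdd f -> meas_locbdd (fun s => - f s).
Proof.
move=> /(mlb_scale (-1)) [mf bf]; split.
  by apply: eq_measurable_fun mf => x _; rewrite mulN1r.
by move=> t t0; have [M h] := bf t t0; exists M => s /h; rewrite mulN1r.
Qed.

Lemma mlb_sum (I : Type) (r : seq I) (F : I -> R -> R) :
  (forall i, meas_locbdd (F i)) -> meas_locbdd (fun s => \sum_(i <- r) F i s).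
Proof.
move=> hF; elim: r => [|a r IH].
  by under [X in meas_locbdd X]funext do rewrite big_nil; exact: mlb_cst.
under [X in meas_locbdd X]funext do rewrite big_cons.
exact: mlb_add.
Qed.

Lemma integ0_ext (f g : R -> R) s : (forall u, 0 <= u <= s -> f u = g u) ->
  integ0 f s = integ0 g s.
Proof.
move=> fg; apply: eq_Rintegral => u; rewrite inE /= in_itv /=; exact: fg.
Qed.

Lemma integ0_add (f g : R -> R) s : meas_locbdd f -> meas_locbdd g -> 0 <= s ->
  integ0 (fun u => f u + g u) s = integ0 f s + integ0 g s.
Proof.
move=> mf mg s0; rewrite /integ0 RintegralD //.
- by have := @mlb_int f s `[0, s] mf s0; apply.
- by have := @mlb_int g s `[0, s] mg s0; apply.
Qed.

Lemma integ0_scale (k : R) (f : R -> R) s : meas_locbdd f -> 0 <= s ->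
  integ0 (fun u => k * f u) s = k * integ0 f s.
Proof.
move=> mf s0; rewrite /integ0 RintegralZl //.
by have := @mlb_int f s `[0, s] mf s0; apply.
Qed.

Lemma integ0_opp (f : R -> R) s : meas_locbdd f -> 0 <= s ->
  integ0 (fun u => - f u) s = - integ0 f s.
Proof.
move=> mf s0; rewrite -mulN1r -integ0_scale //.
by apply: integ0_ext => u _; rewrite mulN1r.
Qed.

Lemma integ0_cst0 s : integ0 (fun _ : R => 0) s = 0.
Proof.
by rewrite /integ0 Rintegral_cst ?mul0r.
Qed.

Lemma integ0_sum (I : Type) (r : seq I) (F : I -> R -> R) s :
  (forall i, meas_locbdd (F i)) -> 0 <= s ->
  integ0 (fun u => \sum_(i <- r) F i u) s = \sum_(i <- r) integ0 (F i) s.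
Proof.
move=> hF s0; elim: r => [|a r IH].
  rewrite big_nil -[RHS](integ0_cst0 s); apply: integ0_ext => u _; by rewrite big_nil.
rewrite big_cons -IH -integ0_add //; last exact: mlb_sum.
by apply: integ0_ext => u _; rewrite big_cons.
Qed.

Lemma integ0_bound (f : R -> R) s L : meas_locbdd f -> 0 <= s ->
  (forall u, 0 <= u <= s -> `|f u| <= L) -> `|integ0 f s| <= L * s.
Proof.
move=> mf s0 hL.
have h1 := @integ0_sub_le f 0 s L mf (lexx 0) s0.
have h2 := @integ0_sub_le (fun u => - f u) 0 s L (mlb_opp f mf) (lexx 0) s0.
rewrite !integ0_0 !subr0 in h1 h2; rewrite integ0_opp // in h2.
rewrite ler_norml -lerNl h1 ?h2 // => u /andP[u0 us].
- by rewrite (le_trans (ler_norm _)) // normrN hL // ltW.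
- by rewrite (le_trans (ler_norm _)) // hL // ltW.
Qed.

Lemma ode (f : R -> R) (m G T : R) : 0 < m -> 0 <= G -> meas_locbdd f -> 0 <= T ->
  (forall s, 0 <= s <= T -> `|f s + m * integ0 f s| <= G) ->
  forall s, 0 <= s <= T -> `|integ0 f s| <= G / m.
Proof.
move=> m0 G0 mf T0 hG s hs.
have s0 : 0 <= s by case/andP: hs.
rewrite ler_norml; apply/andP; split; last first.
  apply: (@ode1 f m G T) => // u hu; exact: le_trans (ler_norm _) (hG u hu).
rewrite lerNl -integ0_opp //.
apply: (@ode1 (fun u => - f u) m G T) => // [|u hu]; first exact: mlb_opp.
have u0 : 0 <= u by case/andP: hu.
rewrite integ0_opp // mulrN -opprD.
have := hG u hu; rewrite -normrN; exact: le_trans (ler_norm _).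
Qed.

End Ana.

Section Sup.
Context {R : realType}.

Lemma supnorm_ub (nf : R -> R) t B : 0 <= t ->
  (forall s, 0 <= s <= t -> nf s <= B) ->
  forall s, 0 <= s <= t -> nf s <= supnorm nf t.
Proof.
move=> t0 hB s hs; apply: sup_upper_bound.
  split; first by exists (nf 0), 0 => //=; rewrite in_itv /= lexx t0.
  by exists B => y [u hu <-]; apply: hB; move: hu; rewrite /= in_itv.
by exists s => //=; rewrite in_itv.
Qed.

Lemma supnorm_ge0 (nf : R -> R) t B : 0 <= t ->
  (forall s, 0 <= s <= t -> 0 <= nf s <= B) -> 0 <= supnorm nf t.
Proof.
move=> t0 hB; apply: (le_trans (y := nf 0)).
  by have := hB 0; rewrite lexx t0 => /(_ isT) /andP[].
apply: (@supnorm_ub nf t B) => //; last by rewrite lexx.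
by move=> s /hB /andP[].
Qed.

Lemma bdd_sum (I : Type) (r : seq I) (F : I -> R -> R) t :
  (forall i, exists M, forall s, 0 <= s <= t -> `|F i s| <= M) ->
  exists B, forall s, 0 <= s <= t -> \sum_(i <- r) `|F i s| <= B.
Proof.
move=> hF; elim: r => [|a r [B hB]]; first by exists 0 => s _; rewrite big_nil.
have [M hM] := hF a; exists (M + B) => s hs; rewrite big_cons.
by apply: lerD; [exact: hM | exact: hB].
Qed.

End Sup.


Section Main.
Context (R : realType) (nI nJ : nat) (E : 'I_nI -> 'I_nJ -> bool)
  (mu : 'I_nI -> 'I_nJ -> R) (theta : 'I_nI -> R).
Context (Emu : forall i j, E i j -> 0 < mu i j)
  (nEmu : forall i j, ~~ E i j -> mu i j = 0) (th0 : forall i, 0 <= theta i).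

Record dat := Dat { dw : 'I_nI -> R -> R; dx : 'I_nI -> R -> R;
  dy : 'I_nI -> R -> R; dz : 'I_nJ -> R -> R;
  dpsi : 'I_nI -> 'I_nJ -> R -> R }.

Definition Hd (d : dat) : Prop :=
  [/\ (forall i, meas_locbdd (dw d i)), (forall i, meas_locbdd (dx d i)),
      (forall i, meas_locbdd (dy d i)), (forall j, meas_locbdd (dz d j))
    & (forall i j, meas_locbdd (dpsi d i j))] /\
  [/\ (forall i j t, ~~ E i j -> 0 <= t -> dpsi d i j t = 0),
      (forall i t, 0 <= t -> dx d i t = dw d i t
          - \sum_(j < nJ) mu i j * integ0 (dpsi d i j) t
          - theta i * integ0 (dy d i) t),
      (forall i t, 0 <= t -> \sum_(j < nJ) dpsi d i j t = dx d i t - dy d i t)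
    & (forall j t, 0 <= t -> \sum_(i < nI) dpsi d i j t = - dz d j t)].

Definition NN (d : dat) T :=
  supnorm (fun s => \sum_(i < nI) `|dw d i s|) T
  + supnorm (fun s => \sum_(i < nI) `|integ0 (dy d i) s|) T
  + supnorm (fun s => \sum_(j < nJ) `|integ0 (dz d j) s|) T.

Lemma le_sum1 (I : finType) (F : I -> R) i : `|F i| <= \sum_(k : I) `|F k|.
Proof. by rewrite (bigD1 i) //= lerDl sumr_ge0. Qed.

Lemma NN_bounds d T s : Hd d -> 0 <= s <= T ->
  [/\ 0 <= NN d T, (forall i, `|dw d i s| <= NN d T),
      (forall i, `|integ0 (dy d i) s| <= NN d T)
    & (forall j, `|integ0 (dz d j) s| <= NN d T)].
Proof.
move=> [[mw mx my mz mp] _] hs.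
have T0 : 0 <= T by case/andP: hs => /le_trans; apply.
have [Bw hBw] := @bdd_sum R _ (index_enum 'I_nI) (dw d) T (fun i => (mw i).2 T T0).
have bY : forall i, exists M, forall u, 0 <= u <= T -> `|integ0 (dy d i) u| <= M.
  move=> i; have [M hM] := (my i).2 T T0.
  exists (M * T) => u /andP[u0 uT].
  have M0 : 0 <= M by apply: le_trans (hM 0 _); rewrite ?lexx.
  apply: le_trans (integ0_bound (dy d i) u M (my i) u0 _) _.
    by move=> v /andP[v0 vu]; apply: hM; rewrite v0 (le_trans vu uT).
  exact: ler_wpM2l.
have bZ : forall j, exists M, forall u, 0 <= u <= T -> `|integ0 (dz d j) u| <= M.
  move=> j; have [M hM] := (mz j).2 T T0.
  exists (M * T) => u /andP[u0 uT].
  have M0 : 0 <= M by apply: le_trans (hM 0 _); rewrite ?lexx.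
  apply: le_trans (integ0_bound (dz d j) u M (mz j) u0 _) _.
    by move=> v /andP[v0 vu]; apply: hM; rewrite v0 (le_trans vu uT).
  exact: ler_wpM2l.
have [BY hBY] := @bdd_sum R _ (index_enum 'I_nI) (fun i => integ0 (dy d i)) T bY.
have [BZ hBZ] := @bdd_sum R _ (index_enum 'I_nJ) (fun j => integ0 (dz d j)) T bZ.
have gw0 := @supnorm_ge0 R (fun s => \sum_(i < nI) `|dw d i s|) T Bw T0
  (fun u hu => introT andP (conj (sumr_ge0 _ (fun _ _ => normr_ge0 _)) (hBw u hu))).
have gy0 := @supnorm_ge0 R (fun s => \sum_(i < nI) `|integ0 (dy d i) s|) T BY T0
  (fun u hu => introT andP (conj (sumr_ge0 _ (fun _ _ => normr_ge0 _)) (hBY u hu))).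
have gz0 := @supnorm_ge0 R (fun s => \sum_(j < nJ) `|integ0 (dz d j) s|) T BZ T0
  (fun u hu => introT andP (conj (sumr_ge0 _ (fun _ _ => normr_ge0 _)) (hBZ u hu))).
have uw := @supnorm_ub R (fun s => \sum_(i < nI) `|dw d i s|) T Bw T0 hBw s hs.
have uy := @supnorm_ub R (fun s => \sum_(i < nI) `|integ0 (dy d i) s|) T BY T0 hBY s hs.
have uz := @supnorm_ub R (fun s => \sum_(j < nJ) `|integ0 (dz d j) s|) T BZ T0 hBZ s hs.
rewrite /NN; split.
- by rewrite !addr_ge0.
- move=> i; apply: le_trans (@le_sum1 _ (fun k => dw d k s) i) _; lra.
- move=> i; apply: le_trans (@le_sum1 _ (fun k => integ0 (dy d k) s) i) _; lra.
- move=> j; apply: le_trans (@le_sum1 _ (fun k => integ0 (dz d k) s) j) _; lra.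
Qed.


Definition good (F : dat -> R -> R) := exists C, 0 <= C /\
  forall d, Hd d -> forall T s, 0 <= s <= T -> `|F d s| <= C * NN d T.

Lemma good_ext (F G : dat -> R -> R) :
  (forall d, Hd d -> forall s, 0 <= s -> F d s = G d s) -> good G -> good F.
Proof.
move=> FG [C [C0 hC]]; exists C; split => // d hd T s hs.
by rewrite FG //; [exact: hC | case/andP: hs].
Qed.
Arguments good_ext {F G}.


Lemma good0 : good (fun _ _ => 0).
Proof. by exists 0; split => // d hd T s hs; rewrite normr0 mul0r. Qed.

Lemma goodD F G : good F -> good G -> good (fun d s => F d s + G d s).
Proof.
move=> [C1 [C10 h1]] [C2 [C20 h2]]; exists (C1 + C2); split; first exact: addr_ge0.
move=> d hd T s hs; apply: le_trans (ler_normD _ _) _.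
by rewrite mulrDl; apply: lerD; [exact: h1 | exact: h2].
Qed.
Arguments goodD {F G}.


Lemma goodZ (k : R) F : good F -> good (fun d s => k * F d s).
Proof.
move=> [C [C0 h]]; exists (`|k| * C); split; first exact: mulr_ge0.
by move=> d hd T s hs; rewrite normrM -mulrA ler_wpM2l //; exact: h.
Qed.
Arguments goodZ k {F}.


Lemma goodN F : good F -> good (fun d s => - F d s).
Proof.
move=> /(goodZ (-1)); apply: good_ext => d _ s _; by rewrite mulN1r.
Qed.
Arguments goodN {F}.


Lemma goodB F G : good F -> good G -> good (fun d s => F d s - G d s).
Proof. by move=> hF /goodN; apply: goodD. Qed.
Arguments goodB {F G}.


Lemma good_abs F : good F -> good (fun d s => `|F d s|).
Proof. by move=> [C [C0 h]]; exists C; split => // d hd T s hs; rewrite normr_id; exact: h. Qed.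
Arguments good_abs {F}.


Lemma good_sum (I : Type) (r : seq I) (P : pred I) (F : I -> dat -> R -> R) :
  (forall i, P i -> good (F i)) -> good (fun d s => \sum_(i <- r | P i) F i d s).
Proof.
move=> hF; elim: r => [|a r IH].
  by apply: good_ext good0 => d _ s _; rewrite big_nil.
case: (boolP (P a)) => Pa.
  apply: good_ext (goodD (hF a Pa) IH) => d _ s _; by rewrite big_cons Pa.
by apply: good_ext IH => d _ s _; rewrite big_cons (negbTE Pa).
Qed.
Arguments good_sum {I} r P {F}.


Lemma good_w i : good (fun d s => dw d i s).
Proof. by exists 1; split => // d hd T s hs; rewrite mul1r; case: (NN_bounds _ _ _ hd hs). Qed.

Lemma good_Y i : good (fun d s => integ0 (dy d i) s).
Proof. by exists 1; split => // d hd T s hs; rewrite mul1r; case: (NN_bounds _ _ _ hd hs). Qed.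

Lemma good_Z j : good (fun d s => integ0 (dz d j) s).
Proof. by exists 1; split => // d hd T s hs; rewrite mul1r; case: (NN_bounds _ _ _ hd hs). Qed.


Definition Psi i j : dat -> R -> R := fun d s => integ0 (dpsi d i j) s.

Lemma integ0_sumI (I : finType) (F : I -> R -> R) s :
  (forall i, meas_locbdd (F i)) -> 0 <= s ->
  integ0 (fun u => \sum_(i : I) F i u) s = \sum_(i : I) integ0 (F i) s.
Proof. exact: integ0_sum. Qed.

Lemma PsiI d i s : Hd d -> 0 <= s ->
  \sum_(j < nJ) Psi i j d s = integ0 (dx d i) s - integ0 (dy d i) s.
Proof.
move=> [[mw mx my mz mp] [h0 hx hI hJ]] s0; rewrite /Psi -integ0_sumI //.
rewrite -integ0_opp // -integ0_add //; last exact: mlb_opp.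
by apply: integ0_ext => u /andP[u0 _]; rewrite hI.
Qed.

Lemma PsiJ d j s : Hd d -> 0 <= s ->
  \sum_(i < nI) Psi i j d s = - integ0 (dz d j) s.
Proof.
move=> [[mw mx my mz mp] [h0 hx hI hJ]] s0; rewrite /Psi -integ0_sumI //.
rewrite -integ0_opp //.
by apply: integ0_ext => u /andP[u0 _]; rewrite hJ.
Qed.

Lemma Psi_nE d i j s : Hd d -> ~~ E i j -> 0 <= s -> Psi i j d s = 0.
Proof.
move=> [_ [h0 _ _ _]] nE s0; rewrite /Psi -(integ0_cst0 s).
by apply: integ0_ext => u /andP[u0 _]; rewrite h0.
Qed.

Lemma ruleJ i j : (forall i', i' != i -> good (Psi i' j)) -> good (Psi i j).
Proof.
move=> hg.
apply: (good_ext (G := fun d s => - integ0 (dz d j) s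
   - \sum_(i' < nI | i' != i) Psi i' j d s)).
  move=> d hd s s0; rewrite -(PsiJ _ _ _ hd s0) (bigD1 i) //=.
  by rewrite addrK.
apply: goodB; first exact/goodN/good_Z.
exact: good_sum.
Qed.

Lemma ruleI i j : E i j -> (forall j', j' != j -> good (Psi i j')) -> good (Psi i j).
Proof.
move=> Eij hg.
set A := fun d s => integ0 (dy d i) s + \sum_(j' < nJ | j' != j) Psi i j' d s.
have gA : good A by apply: goodD; [exact: good_Y | exact: good_sum].
set g := fun d s => dw d i s + mu i j * A d s
   - \sum_(j' < nJ | j' != j) mu i j' * Psi i j' d s - theta i * integ0 (dy d i) s.
have gg : good g.
  apply: goodB; last exact/goodZ/good_Y.
  apply: goodB; first by apply: goodD; [exact: good_w | exact: goodZ].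
  by apply: good_sum => j' /hg; apply: goodZ.
have XA : forall d s, Hd d -> 0 <= s -> integ0 (dx d i) s = Psi i j d s + A d s.
  move=> d s hd s0; have := PsiI _ i _ hd s0; rewrite (bigD1 j) //= /A.
  move=> h; lra.

have key : forall d s, Hd d -> 0 <= s ->
    dx d i s + mu i j * integ0 (dx d i) s = g d s.
  move=> d s hd s0; rewrite XA // /g.
  have [_ [_ hx _ _]] := hd; rewrite hx // (bigD1 j) //=.
  rewrite /Psi; ring.
have gX : good (fun d s => integ0 (dx d i) s).
  have [Cg [Cg0 hCg]] := gg.
  have m0 := Emu _ _ Eij.
  exists (Cg / mu i j); split; first by rewrite divr_ge0 // ltW.
  move=> d hd T s hs.
  have T0 : 0 <= T by case/andP: hs => /le_trans; apply.
  have N0 : 0 <= NN d T by case: (NN_bounds _ _ _ hd (introT andP (conj T0 (lexx T)))).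
  rewrite mulrAC.
  have [[_ mx _ _ _] _] := hd.
  apply: (@ode _ (dx d i) (mu i j) (Cg * NN d T) T) => //.
    exact: mulr_ge0.
  move=> u hu; rewrite key //; first exact: hCg.
  by case/andP: hu.
apply: (good_ext (G := fun d s => integ0 (dx d i) s - A d s)).
  by move=> d hd s s0; rewrite XA // addrK.
exact: goodB.
Qed.


Lemma all_good : acyclicG E -> forall i j, good (Psi i j).
Proof.
move=> acy i j.
have := @tree_closure nI nJ E (fun i j => `[< good (Psi i j) >]) acy.
have gnE : forall i j, ~~ E i j -> `[< good (Psi i j) >].
  move=> i' j' nE; apply/asboolP; apply: good_ext good0 => d hd s s0.
  exact: Psi_nE.
move=> /(_ gnE) H.
have {}H := H (fun i j Eij h => asboolT (ruleI _ _ Eij (fun j' hj => asboolW (h j' hj)))).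
have {}H := H (fun i j Eij h => asboolT (ruleJ _ _ (fun i' hi => asboolW (h i' hi)))).
exact/asboolP/H.
Qed.

Lemma main_good : acyclicG E ->
  good (fun d t => \sum_(i < nI) \sum_(j < nJ) `|integ0 (dpsi d i j) t|
                   + \sum_(i < nI) `|dx d i t|).
Proof.
move=> acy; have gP := all_good acy.
apply: goodD.
  by apply: good_sum => i _; apply: good_sum => j _; apply: good_abs; exact: gP.
apply: good_sum => i _; apply: good_abs.
apply: (good_ext (G := fun d t => dw d i t
          - \sum_(j < nJ) mu i j * Psi i j d t - theta i * integ0 (dy d i) t)).
  by move=> d [_ [_ hx _ _]] s s0; rewrite hx.
apply: goodB; last exact/goodZ/good_Y.
apply: goodB; first exact: good_w.
by apply: good_sum => j _; apply: goodZ.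
Qed.

End Main.
Theorem proposition1 (R : realType) (nI nJ : nat)
  (E : 'I_nI -> 'I_nJ -> bool) (mu : 'I_nI -> 'I_nJ -> R) (theta : 'I_nI -> R) :
  is_tree E ->
  (forall i j, E i j -> 0 < mu i j) ->
  (forall i j, ~~ E i j -> mu i j = 0) ->
  (forall i, 0 <= theta i) ->
  exists m1 : R,
  forall (w x y : 'I_nI -> R -> R) (z : 'I_nJ -> R -> R)
         (psi : 'I_nI -> 'I_nJ -> R -> R),
    (forall i, meas_locbdd (w i)) ->
    (forall i, meas_locbdd (x i)) ->
    (forall i, meas_locbdd (y i)) ->
    (forall j, meas_locbdd (z j)) ->
    (forall i j, meas_locbdd (psi i j)) ->
    (forall i j t, ~~ E i j -> 0 <= t -> psi i j t = 0) ->
    (forall i t, 0 <= t ->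
       x i t = w i t - \sum_(j < nJ) mu i j * integ0 (psi i j) t
               - theta i * integ0 (y i) t) ->
    (forall i t, 0 <= t -> \sum_(j < nJ) psi i j t = x i t - y i t) ->
    (forall j t, 0 <= t -> \sum_(i < nI) psi i j t = - z j t) ->
    forall t, 0 <= t ->
      \sum_(i < nI) \sum_(j < nJ) `|integ0 (psi i j) t|
        + \sum_(i < nI) `|x i t|
      <= m1 * (supnorm (fun s => \sum_(i < nI) `|w i s|) t
               + supnorm (fun s => \sum_(i < nI) `|integ0 (y i) s|) t
               + supnorm (fun s => \sum_(j < nJ) `|integ0 (z j) s|) t).
Proof.
move=> [_ [_ acy]] Emu _ _.
have [C [C0 hC]] := @main_good R nI nJ E mu theta Emu acy.
exists C => w x y z psi mw mx my mz mp h0 hx hI hJ t t0.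
pose d := @Dat R nI nJ w x y z psi.
have hd : @Hd R nI nJ E mu theta d by split; split.
have := hC d hd t t; rewrite t0 lexx => /(_ isT).
rewrite ger0_norm //.
by rewrite addr_ge0 // sumr_ge0 // => i _; rewrite sumr_ge0.
Qed.
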